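(* Let $\mathcal{R}$ be a finite valuation ring with residue field of cardinality $q$ and with uniformizer of nilpotency degree $r$ (so $|\mathcal{R}|=q^r$), and let $\mathcal{R}^*$ denote its group of units. Let $G$ be a subgroup of $\mathcal{R}^*$, let $g,h\colon G\to\mathcal{R}^*$ be functions, and let $f(x,y)=g(x)h(y)(x+y)$ for $x,y\in G$. Let $K\ge1$ and assume: (i) for every fixed $z\in G$, the function $x\mapsto g(xz)/g(x)$ takes at most $K$ distinct values on $G$, and the function $x\mapsto h(xz)/h(x)$ takes at most $K$ distinct values on $G$; (ii) for every $u\in G$, $\mu(\varphi_u)\le K$, where $\varphi_u\colon G\to\mathcal{R}$, $\varphi_u(x)=x\,g(x)\,h(ux)$. Then there is a constant $c>0$ depending only on $r$ and $K$ such that for all $A,B,C\subset G$, \[|f(A,B)|\,|A\cdot C|\,|B\cdot C|\ \ge\ c\min\left\{q^r|A||B|,\ \frac{|A|^2|B|^2|C|}{q^{2r-1}}\right\}.\]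
   Context: A finite valuation ring is a finite commutative ring with identity that is local (has a unique maximal ideal) and principal (every ideal is principal); its maximal ideal is generated by a non-unit $z$ (a uniformizer), the residue field $\mathcal{R}/(z)$ has $q$ elements, and $r$ is the least integer with $z^r=0$. For a function $\varphi\colon G\to\mathcal{R}$, $\mu(\varphi)=\max_{t\in\mathcal{R}}|\{x\in G:\varphi(x)=t\}|$. Notation: $f(A,B)=\{f(x,y):x\in A,y\in B\}$, $A\cdot C=\{ac:a\in A,c\in C\}$. *)

(* Defs.v *)
From HB Require Import structures.
From mathcomp Require Import all_boot all_order all_algebra.
Set Implicit Arguments. Unset Strict Implicit. Unset Printing Implicit Defensive.
Import Order.TTheory GRing.Theory Num.Theory.
Local Open Scope ring_scope.

Section FVR.
Variable R : finComUnitRingType.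

Definition is_ideal (I : {set R}) : Prop :=
  [/\ 0 \in I,
      (forall x y, x \in I -> y \in I -> x - y \in I) &
      (forall a x, x \in I -> a * x \in I)].

Definition is_maximal_ideal (M : {set R}) : Prop :=
  [/\ is_ideal M, M != [set: R] &
      forall I, is_ideal I -> M \subset I -> I = M \/ I = [set: R]].

Definition pideal (a : R) : {set R} := [set a * x | x : R].

Definition is_local : Prop :=
  exists M, forall I, is_maximal_ideal I <-> I = M.

Definition is_principal : Prop :=
  forall I, is_ideal I -> exists a, I = pideal a.

Definition finite_valuation_ring : Prop := is_local /\ is_principal.

Definition uniformizer (z : R) : Prop :=
  z \isn't a GRing.unit /\ is_maximal_ideal (pideal z).

Definition nilp_degree (z : R) (r : nat) : Prop :=
  z ^+ r = 0 /\ forall n, (n < r)%N -> z ^+ n != 0.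

(* cardinality of the residue field R/(z): number of additive cosets of (z) *)
Definition residue_card (z : R) : nat := (#|[set: R]| %/ #|pideal z|)%N.

Definition unit_subgroup (G : {set R}) : Prop :=
  [/\ {in G, forall x, x \is a GRing.unit},
      1 \in G,
      {in G &, forall x y, x * y \in G} &
      {in G, forall x, x^-1 \in G}].

Definition mu_on (G : {set R}) (phi : R -> R) : nat :=
  (\max_(t : R) #|[set x in G | phi x == t]|)%N.

Definition fimage (f : R -> R -> R) (A B : {set R}) : {set R} :=
  [set f x y | x in A, y in B].
Definition setmul (A C : {set R}) : {set R} := [set a * c | a in A, c in C].

End FVR.

(* Main.v *)
Require Import Defs.
From HB Require Import structures.
From mathcomp Require Import all_boot all_order all_algebra.
From mathcomp Require Import ring lra.
Set Implicit Arguments. Unset Strict Implicit. Unset Printing Implicit Defensive.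
Import Order.TTheory GRing.Theory Num.Theory.
Lemma fiber_bound (I J : finType) (h : I -> J) (D : {set I}) (E : {set J}) k :
  h @: D \subset E -> (forall j, #|[set i in D | h i == j]| <= k)%N ->
  (#|D| <= k * #|E|)%N.
Proof.
move=> sE Hk.
rewrite -sum1_card (partition_big_imset h).
apply: (@leq_trans (\sum_(j in h @: D) k)).
  apply: leq_sum => j _; rewrite sum1dep_card.
  apply: leq_trans (Hk j); apply: subset_leq_card; apply/subsetP => i.
  by rewrite !inE.
rewrite sum_nat_const mulnC leq_mul2l; apply/orP; right.
exact: subset_leq_card.
Qed.

Lemma fiber_eq (I J : finType) (h : I -> J) (D : {set I}) k :
  (forall j, j \in h @: D -> #|[set i in D | h i == j]| = k)%N ->
  (#|D| = #|h @: D| * k)%N.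
Proof.
move=> Hk.
rewrite -sum1_card (partition_big_imset h) -sum_nat_const.
apply: eq_bigr => j jD; rewrite sum1dep_card -(Hk j jD).
by apply: eq_card => i; rewrite !inE.
Qed.

Lemma fiber_sum (I J : finType) (h : I -> J) (D : {set I}) (E : {set J}) :
  {in D, forall i, h i \in E} ->
  \sum_(j in E) #|[set i in D | h i == j]| = #|D|.
Proof.
move=> HE; rewrite -sum1_card (partition_big h (mem E)) //=.
by apply: eq_bigr => j _; rewrite sum1dep_card.
Qed.

Lemma q_bounds (N Z r : nat) : 0 < Z -> Z <= N -> Z ^ r * N = N ^ r -> 0 < r ->
  [/\ 0 < N %/ Z, (N %/ Z) ^ r <= N & N * Z <= 4 ^ r * (N %/ Z) ^ (2 * r - 1)].
Proof.
move=> Z0 ZN hc r0.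
set q := N %/ Z.
have q0 : 0 < q by rewrite divn_gt0.
have qZ : q * Z <= N by apply: leq_divM.
have Zr0 : 0 < Z ^ r by rewrite expn_gt0 Z0.
have h1 : q ^ r <= N.
  rewrite -(leq_pmul2r Zr0) -expnMn [N * _]mulnC hc leq_exp2r //.
have h2 : N <= (q.+1) ^ r.
  rewrite -(leq_pmul2r Zr0) -expnMn [N * _]mulnC hc leq_exp2r //.
  by apply: ltnW; apply: ltn_ceil.
have h3 : N <= (2 * q) ^ r.
  apply: leq_trans h2 _; rewrite leq_exp2r // mul2n -addnn -addn1 leq_add2l; exact: q0.
split => //.
rewrite -(leq_pmul2l q0).
apply: (@leq_trans (N * N)).
  by rewrite mulnCA leq_mul2l qZ orbT.
apply: (@leq_trans ((2 * q) ^ r * (2 * q) ^ r)); first exact: leq_mul.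
rewrite !expnMn mulnACA -expnMn -expnD addnn -mul2n.
by rewrite mulnCA -expnS subn1 prednK // muln_gt0.
Qed.

Local Open Scope ring_scope.
Lemma final_arith (a b m K X Y Lc Pc Ic n Z qr qq F4 : rat) :
 1 <= a -> 1 <= b -> 1 <= m -> 1 <= K -> 0 <= X -> 0 < n -> 0 <= Z -> 0 <= Pc ->
 0 <= Lc -> 0 < qq -> 1 <= F4 ->
 a * b * m <= K * Ic ->
 Ic <= Lc * (Pc / n) + Lc * (a / (4 * K ^+ 2)) + (2 * Pc * n * Z) / (4 * (a / (4 * K ^+ 2))) ->
 Lc <= K * m * b -> Pc <= X -> b <= Y ->
 qr <= n -> n * Z <= F4 * qq ->
 (8 * K ^+ 3 * F4)^-1 * Num.min (qr * a * b) (a ^+ 2 * b ^+ 2 * m / qq) <= X * Y.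
Proof.
move=> a1 b1 m1 K1 X0 n0 Z0 P0 L0 qq0 F1 h1 h2 hL hP hY hq hNZ.
have a0 : 0 < a by apply: lt_le_trans a1; rewrite ltr01.
have b0 : 0 < b by apply: lt_le_trans b1; rewrite ltr01.
have m0 : 0 < m by apply: lt_le_trans m1; rewrite ltr01.
have K0 : 0 < K by apply: lt_le_trans K1; rewrite ltr01.
have an : a != 0 by rewrite gt_eqF.
have Kn : K != 0 by rewrite gt_eqF.
have nn : n != 0 by rewrite gt_eqF.
have H : a * b * m <= K * Lc * Pc / n + Lc * a / (4 * K) + 2 * K ^+ 3 * Pc * n * Z / a.
  apply: (le_trans h1).
  have -> : K * Lc * Pc / n + Lc * a / (4 * K) + 2 * K ^+ 3 * Pc * n * Z / a =
     K * (Lc * (Pc / n) + Lc * (a / (4 * K ^+ 2)) + (2 * Pc * n * Z) / (4 * (a / (4 * K ^+ 2)))).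
    by field; rewrite ?Kn ?an ?nn.
  by rewrite ler_pM2l.
have e2 : Lc * a / (4 * K) <= a * b * m / 4.
  have -> : Lc * a / (4 * K) = Lc * (a / (4 * K)) by rewrite mulrA.
  apply: le_trans (ler_wpM2r _ hL) _; first by rewrite divr_ge0 ?ltW // mulr_gt0.
  rewrite le_eqVlt; apply/orP; left; apply/eqP.
  by field; rewrite ?Kn ?an ?nn.
have e1 : K * Lc * Pc / n <= K * (K * m * b) * X / n.
  rewrite ler_pM2r ?invr_gt0 // -!mulrA ler_pM2l // [X in _ <= X]mulrA [X in _ <= X]mulrA.
  by apply: ler_pM.
have e3 : 2 * K ^+ 3 * Pc * n * Z / a <= 2 * K ^+ 3 * X * n * Z / a.
  apply: ler_wpM2r; first by rewrite invr_ge0 ltW.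
  apply: ler_wpM2r => //; apply: ler_wpM2r; first exact: ltW.
  by apply: ler_wpM2l => //; rewrite mulr_ge0 // exprn_ge0 // ltW.
have c0 : 0 < 8 * K ^+ 3 * F4 by rewrite !mulr_gt0 ?exprn_gt0 // (lt_le_trans _ F1) ?ltr01.
have X0Y : 0 <= X * Y by rewrite mulr_ge0 // (le_trans _ hY) // ltW.
have Y0 : 0 <= Y by rewrite (le_trans _ hY) // ltW.
set U := K * (K * m * b) * X / n.
set W := 2 * K ^+ 3 * X * n * Z / a.
have HUW : 3 / 8 * (a * b * m) <= U \/ 3 / 8 * (a * b * m) <= W.
  case: (lerP (3 / 8 * (a * b * m)) U) => hU; [by left | right].
  rewrite /U /W in hU H e1 e2 e3 *; lra.
rewrite mulrC ler_pdivrMr //.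
case: HUW => hA.
  apply: (@le_trans _ _ (qr * a * b)); first by rewrite ge_min lexx.
  have hA' : 3 * a * n * (m * b) <= 8 * K ^+ 2 * X * (m * b).
    move: hA; rewrite /U ler_pdivlMr // => hA; lra.
  rewrite ler_pM2r ?mulr_gt0 // in hA'.
  have s1 : qr * a * b <= n * a * b.
    by apply: ler_wpM2r; [exact: ltW | apply: ler_wpM2r; [exact: ltW | ]].
  have s2 : 3 * (n * a * b) <= 8 * K ^+ 2 * X * b.
    by have := ler_wpM2r (ltW b0) hA'; lra.
  have s3 : K ^+ 2 * X * b <= K ^+ 2 * X * Y by apply: ler_wpM2l => //; rewrite mulr_ge0 ?exprn_ge0 // ltW.
  have kf : 1 <= K * F4 by clear -K1 F1; nra.
  have kk : K ^+ 2 * 1 <= K ^+ 2 * (K * F4) by apply: ler_wpM2l => //; rewrite exprn_ge0 // ltW.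
  have s4 := ler_wpM2r X0Y kk.
  rewrite mulr1 mulrA -exprSr in s4.
  have F0 : 0 <= F4 by apply: le_trans F1; rewrite ler01.
  have s5 : 0 <= K ^+ 3 * F4 * X * Y by rewrite -!mulrA !mulr_ge0 ?exprn_ge0 // ltW.
  clear -s1 s2 s3 s4 s5; lra.
apply: (@le_trans _ _ (a ^+ 2 * b ^+ 2 * m / qq)); first by rewrite ge_min lexx orbT.
rewrite ler_pdivrMr //.
move: hA; rewrite /W ler_pdivlMr // => hA.
have K3 : 0 <= K ^+ 3 by rewrite exprn_ge0 // ltW.
have F0 : 0 <= F4 by apply: le_trans F1; rewrite ler01.
have W0 : 0 <= 2 * K ^+ 3 * X * n * Z by rewrite !mulr_ge0 // ltW.
have t1 := ler_wpM2r (ltW b0) hA.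
have t2 : 2 * K ^+ 3 * X * n * Z * b <= 2 * K ^+ 3 * X * n * Z * Y by apply: ler_wpM2l.
have t3 : 2 * K ^+ 3 * X * Y * (n * Z) <= 2 * K ^+ 3 * X * Y * (F4 * qq).
  by apply: ler_wpM2l => //; rewrite !mulr_ge0 // ltW.
have s5 : 0 <= K ^+ 3 * F4 * X * Y * qq by rewrite !mulr_ge0 // ltW.
clear -t1 t2 t3 s5; lra.
Qed.


Lemma pt_bound (x mu lam : rat) : 0 < lam -> x <= mu + lam + (x - mu) ^+ 2 / (4 * lam).
Proof.
move=> l0.
have h4 : lam != 0 by rewrite gt_eqF.
rewrite -subr_ge0.
have -> : mu + lam + (x - mu) ^+ 2 / (4 * lam) - x = (x - mu - 2 * lam) ^+ 2 / (4 * lam).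
  by field.
by rewrite divr_ge0 ?sqr_ge0 // mulr_ge0 // ltW.
Qed.

Lemma var_expand (I : finType) (F : {set I}) (x : I -> rat) mu :
 \sum_(l in F) (x l - mu) ^+ 2 =
   \sum_(l in F) x l ^+ 2 - 2 * mu * \sum_(l in F) x l + #|F|%:R * mu ^+ 2.
Proof.
rewrite (eq_bigr (fun l => (x l ^+ 2 - 2 * mu * x l) + mu ^+ 2)); last first.
  by move=> l _; ring.
rewrite big_split sumrB sumr_const -mulr_sumr /=.
by rewrite [#|F|%:R * _]mulr_natl.
Qed.

Lemma var_bound (I : finType) (F L : {set I}) (x : I -> rat) (mu lam V : rat) :
 0 < lam -> L \subset F -> \sum_(l in F) (x l - mu) ^+ 2 <= V ->
 \sum_(l in L) x l <= #|L|%:R * mu + #|L|%:R * lam + V / (4 * lam).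
Proof.
move=> l0 sLF hV.
apply: le_trans (ler_sum _ (fun l _ => pt_bound (x l) mu l0)) _.
rewrite big_split big_split /= !sumr_const -mulr_suml.
rewrite [#|L|%:R * mu]mulr_natl [#|L|%:R * lam]mulr_natl lerD2l.
have hd : 0 <= (4 * lam)^-1 by rewrite invr_ge0 mulr_ge0 // ltW.
apply: ler_wpM2r => //.
apply: le_trans hV.
rewrite [X in _ <= X](big_setID L) /= (setIidPr sLF) lerDl.
by apply: sumr_ge0 => l _; rewrite sqr_ge0.
Qed.

Section Alg.
Variable R : finComUnitRingType.

Definition idb (I : {set R}) : bool :=
  [&& (0 : R) \in I, [forall x in I, forall y in I, x - y \in I] &
      [forall a : R, forall x in I, a * x \in I]].

Lemma idbP I : reflect (is_ideal I) (idb I).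
Proof.
apply: (iffP and3P) => [[H0 /forallP H1 /forallP H2]|[H0 H1 H2]]; split => //.
- move=> x y xI yI; move/(_ x): H1; rewrite xI /= => /forallP/(_ y).
  by rewrite yI.
- move=> a x xI; move/(_ a): H2 => /forallP/(_ x); by rewrite xI.
- apply/forallP => x; apply/implyP => xI; apply/forallP => y; apply/implyP => yI.
  exact: H1.
- apply/forallP => a; apply/forallP => x; apply/implyP => xI; exact: H2.
Qed.

Lemma pideal_ideal (x : R) : is_ideal (pideal x).
Proof.
split.
- by apply/imsetP; exists 0; rewrite ?mulr0.
- move=> a b /imsetP[u _ ->] /imsetP[v _ ->]; apply/imsetP; exists (u - v) => //.
  by rewrite mulrBr.
- move=> a b /imsetP[u _ ->]; apply/imsetP; exists (a * u) => //.
  by rewrite mulrCA.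
Qed.

Lemma mem_pideal (x : R) : x \in pideal x.
Proof. by apply/imsetP; exists 1; rewrite ?mulr1. Qed.

Lemma ideal_one I : is_ideal I -> 1 \in I -> I = [set: R].
Proof.
move=> [_ _ H] oI; apply/setP => a; rewrite inE.
by have := H a 1 oI; rewrite mulr1.
Qed.

Lemma nonunit_pideal (z : R) : finite_valuation_ring R -> uniformizer z ->
  forall x, x \isn't a GRing.unit -> x \in pideal z.
Proof.
move=> [[M HM] _] [_ Mz] x xn.
have eqz : pideal z = M by apply/HM.
set S := [set J : {set R} | idb J && (1 \notin J) && (pideal x \subset J)].
have I0S : pideal x \in S.
  rewrite /S inE (introT (idbP _) (pideal_ideal x)) subxx andbT /=.
  apply/negP => /imsetP[u _ /esym u1].
  by move/negP: xn; apply; apply/unitrP; exists u; rewrite mulrC u1.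
case: (@arg_maxnP _ (pideal x) (fun J => J \in S) (fun J => #|J|) I0S) => J.
move=> SJ Jmax; move: SJ; rewrite /S inE => /andP[/andP[/idbP iJ oJ] sJ].
have mJ : is_maximal_ideal J.
  split => //.
    by apply/negP => /eqP JT; move/negP: oJ; apply; rewrite JT inE.
  move=> I iI sI; case: (boolP (1 \in I)) => oI.
    by right; apply: ideal_one.
  left; apply/eqP; rewrite eq_sym eqEcard sI /=.
  apply: Jmax; rewrite /S inE (introT (idbP _) iI) oI /=.
  exact: subset_trans sJ sI.
have -> : pideal z = J by rewrite eqz; apply/esym/HM.
by apply: (subsetP sJ); apply: mem_pideal.
Qed.


Lemma ker_fiber (w : R) (S : {set R}) :
  (0 : R) \in S -> (forall a b, a \in S -> b \in S -> a - b \in S) ->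
  [set a | w * a == 0] \subset S ->
  #|S| = muln #|[set w * a | a in S]| #|[set a | w * a == 0]|.
Proof.
move=> S0 SB sK.
apply: fiber_eq => j /imsetP[a0 a0S ->].
rewrite -(card_imset [set a | w * a == 0] (addrI a0)).
apply: eq_card => i; rewrite !inE.
apply/andP/imsetP => [[iS /eqP e]|[k]].
  exists (i - a0); last by rewrite addrC subrK.
  by rewrite inE mulrBr e subrr.
rewrite inE => /eqP k0 ->; split.
  have nk : - k \in S by rewrite -sub0r; apply: SB => //; apply: (subsetP sK); rewrite inE k0.
  by rewrite -(opprK k); apply: SB.
by rewrite mulrDr k0 addr0.
Qed.


Variable z : R.
Definition Sj (j : nat) : {set R} := [set z ^+ j * a | a : R].

Lemma Sj_T j : Sj j = [set z ^+ j * a | a in [set: R]].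
Proof. by apply/setP => x; apply/imsetP/imsetP => [[a _ ->]|[a _ ->]]; exists a. Qed.

Lemma Sj_S j : Sj j.+1 = [set z ^+ j * a | a in pideal z].
Proof.
apply/setP => x; apply/imsetP/imsetP => [[a _ ->]|[b /imsetP[a _ ->] ->]].
  by exists (z * a); [apply/imsetP; exists a | rewrite exprSr mulrA].
by exists a => //; rewrite exprSr mulrA.
Qed.

Lemma chain_step r j : nilp_degree z r -> (j < r)%N ->
  (forall x, x \isn't a GRing.unit -> x \in pideal z) ->
  (#|pideal z| * #|Sj j| = #|[set: R]| * #|Sj j.+1|)%N.
Proof.
move=> [_ Hd] jr Hn.
have kS : [set a | z ^+ j * a == 0] \subset pideal z.
  apply/subsetP => a; rewrite inE => /eqP e; apply: Hn; apply/negP => ua.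
  by move/negP: (Hd j jr); apply; apply/eqP; rewrite -(mulrK ua (z ^+ j)) e mul0r.
have e1 := ker_fiber (w:=z ^+ j) (S:=[set: R]) (in_setT _) (fun a b _ _ => in_setT _) (subsetT _).
have iz := pideal_ideal z; case: iz => [iz0 izB _].
have e2 := ker_fiber (w:=z ^+ j) (S:=pideal z) iz0 izB kS.
rewrite Sj_T Sj_S {1}e2 {1}e1.
by rewrite [LHS]mulnC mulnA mulnAC.
Qed.

Lemma chain r : nilp_degree z r ->
  (forall x, x \isn't a GRing.unit -> x \in pideal z) ->
  (#|pideal z| ^ r * #|[set: R]| = #|[set: R]| ^ r)%N.
Proof.
move=> Hd Hn.
have H : forall j, (j <= r)%N -> (#|pideal z| ^ j * #|[set: R]| = #|[set: R]| ^ j * #|Sj j|)%N.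
  elim=> [_|j IH jr].
    rewrite !expn0 !mul1n; apply: eq_card => x; rewrite !inE.
    by apply/esym/imsetP; exists x; rewrite ?expr0 ?mul1r.
  rewrite expnS -mulnA IH ?(ltnW jr) // mulnCA (chain_step Hd jr Hn) expnS mulnA.
  by rewrite (mulnC #|[set: R]|).
rewrite H //.
suff -> : Sj r = [set 0] by rewrite cards1 muln1.
case: Hd => zr _; apply/setP => x; rewrite !inE.
by apply/imsetP/eqP => [[a _ ->]|->]; [rewrite zr mul0r|exists 0; rewrite ?mulr0].
Qed.

End Alg.

Section Inc.
Variable R : finComUnitRingType.
Variable Zs : {set R}.
Hypothesis Hn : forall x : R, x \isn't a GRing.unit -> x \in Zs.

Definition on (p l : R * R) := p.2 == l.1 * p.1 + l.2.
Definition Fl : {set R * R} := [set l | l.1 \is a GRing.unit].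
Definition Tu : {set R} := [set t | t \is a GRing.unit].
Definition xl (P : {set R * R}) l := #|[set p in P | on p l]|.
Definition Inc (P L : {set R * R}) : {set (R * R) * (R * R)} :=
  [set pl | [&& pl.1 \in P, pl.2 \in L & on pl.1 pl.2]].

Lemma inc_sum P L : #|Inc P L| = (\sum_(l in L) xl P l)%N.
Proof.
rewrite -(fiber_sum (h := snd) (D := Inc P L) (E := L)); last first.
  by move=> pl; rewrite inE => /and3P[].
apply: eq_bigr => l lL; rewrite /xl.
rewrite -(card_in_imset (f := fun p => (p, l)) (D := [set p in P | on p l])); last first.
  by move=> a b _ _ [].
apply: eq_card => [[p l']]; rewrite !inE /=.
apply/and3P/imsetP => [[/and3P[pP l'L o] /eqP e1 /eqP e2]|[p' ]].
  have el : l' = l by move: e1 e2; case: (l') (l) => ? ? [? ?] /= -> ->.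
  by subst l'; exists p; rewrite ?inE ?pP.
by rewrite inE => /andP[pP o] [-> ->]; rewrite pP lL o !eqxx.
Qed.

Lemma lines_through p : #|[set l in Fl | on p l]| = #|Tu|.
Proof.
rewrite -(card_in_imset (f := fun t => (t, p.2 - t * p.1)) (D := Tu)); last first.
  by move=> a b _ _ [].
apply: eq_card => [[t b]]; rewrite !inE /on /=.
apply/andP/imsetP => [[tu /eqP e]|[t' ]].
  by exists t; rewrite ?inE // e addrC addKr.
by rewrite inE => tu [-> ->]; rewrite tu addrC subrK.
Qed.

Lemma inc_F P : #|Inc P Fl| = (#|P| * #|Tu|)%N.
Proof.
rewrite -(fiber_sum (h := fst) (D := Inc P Fl) (E := P)); last first.
  by move=> pl; rewrite inE => /and3P[].
rewrite -sum_nat_const; apply: eq_bigr => p pP.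
rewrite -(lines_through p).
rewrite -(card_in_imset (f := fun l => (p, l)) (D := [set l in Fl | on p l])); last first.
  by move=> a b _ _ [].
apply: eq_card => [[p' l]]; rewrite !inE /=.
apply/and3P/imsetP => [[/and3P[_ lF o] /eqP e1 /eqP e2]|[l' ]].
  have el : p' = p by move: e1 e2; case: (p') (p) => ? ? [? ?] /= -> ->.
  by subst p'; exists l; rewrite ?inE ?lF.
rewrite inE => /andP[lF o] [-> ->]; move: lF; rewrite inE => ->; by rewrite pP o !eqxx.
Qed.


Lemma slope_eq l p p' : on p l -> on p' l -> p'.2 - p.2 = l.1 * (p'.1 - p.1).
Proof. by move=> /eqP -> /eqP ->; ring. Qed.

Lemma line_unique l l' p p' : on p l -> on p' l -> on p l' -> on p' l' ->
  (p'.1 - p.1) \is a GRing.unit -> l = l'.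
Proof.
move=> o1 o2 o3 o4 u.
have e1 : l.1 = l'.1.
  by apply: (mulIr u); rewrite /= -(slope_eq o1 o2) -(slope_eq o3 o4).
have e2 : l.2 = l'.2.
  move/eqP: o1 => o1; move/eqP: o3 => o3.
  by rewrite -[l.2](addKr (l.1 * p.1)) -[l'.2](addKr (l'.1 * p.1)) -o1 -o3 e1.
by move: e1 e2; case: (l) (l') => ? ? [? ?] /= -> ->.
Qed.

Definition Tr (P : {set R * R}) : {set (R * R) * (R * R) * (R * R)} :=
  [set t | [&& t.1.1 \in Fl, t.1.2 \in P, t.2 \in P, on t.1.2 t.1.1 & on t.2 t.1.1]].

Lemma tr_sum P : #|Tr P| = (\sum_(l in Fl) xl P l ^ 2)%N.
Proof.
rewrite -(fiber_sum (h := fun t => t.1.1) (D := Tr P) (E := Fl)); last first.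
  by move=> t; rewrite inE => /and5P[].
apply: eq_bigr => l lF; rewrite /xl expnS expn1 -cardsX.
rewrite -(card_in_imset (f := fun pp => ((l, pp.1), pp.2))
   (D := setX [set p in P | on p l] [set p in P | on p l])); last first.
  by move=> [a b] [c d] _ _ [-> ->].
apply: eq_card => [[[l' p] p']]; rewrite !inE /=.
apply/idP/imsetP => [/andP[/and5P[lF' pP p'P o o'] /eqP e]|[[a b]]].
  by subst l'; exists (p, p'); rewrite // !inE pP p'P o o'.
rewrite !inE /= => /andP[/andP[aP ao] /andP[bP bo]] [-> -> ->].
by move: lF; rewrite inE => ->; rewrite aP bP ao bo eqxx.
Qed.

Lemma fib_bound P p0 :
  (#|[set t in Tr P | t.1.2 == p0]| <= #|P| + #|Tu| * #|Zs|)%N.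
Proof.
set Fib := [set t in Tr P | t.1.2 == p0].
set U := [set t : (R * R) * (R * R) * (R * R) | (t.2.1 - p0.1) \is a GRing.unit].
rewrite -(cardsID U Fib); apply: leq_add.
  rewrite -(card_in_imset (f := snd) (D := Fib :&: U)); last first.
    move=> [[l p] p'] [[l' q] q']; rewrite !inE /= /on.
    move=> /andP[/andP[/and5P[lF _ _ o1 o2] /eqP e] u].
    move=> /andP[/andP[/and5P[lF' _ _ o1' o2'] /eqP e'] _] /= eq.
    subst p q q'.
    by rewrite (line_unique o1 o2 o1' o2').
  apply: subset_leq_card; apply/subsetP => x /imsetP[t]; rewrite !inE => /andP[/andP[/and5P[_ _ ? _ _] _] _] ->.
  done.
rewrite -(lines_through p0) -cardsX.
rewrite -(card_in_imset (f := fun t => (t.1.1, t.2.1 - p0.1)) (D := Fib :\: U)); last first.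
  move=> [[l p] p'] [[l' q] q']; rewrite !inE /= /on.
  move=> /andP[_ /andP[/and5P[lF _ _ o1 /eqP o2] /eqP e]].
  move=> /andP[_ /andP[/and5P[lF' _ _ o1' /eqP o2'] /eqP e']] [el ed].
  subst p q l'.
  have e1 : p'.1 = q'.1 by move/(congr1 (fun x => x + p0.1)): ed; rewrite !subrK.
  by congr (_, _); move: o2 o2'; case: (p') (q') e1 => ? ? [? ?] /= -> -> ->.
apply: subset_leq_card; apply/subsetP => x /imsetP[[[l p] p']].
rewrite !inE /= => /andP[nu /andP[/and5P[lF _ _ o1 o2] /eqP e]] ->.
subst p; rewrite /= lF o1 /=; apply: Hn; exact: nu.
Qed.

Lemma sum_sq P : (\sum_(l in Fl) xl P l ^ 2 <= (#|P| + #|Tu| * #|Zs|) * #|P|)%N.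
Proof.
rewrite -tr_sum; apply: (@fiber_bound _ _ (fun t => t.1.2)).
  by apply/subsetP => x /imsetP[t]; rewrite inE => /and5P[_ ? _ _ _] ->.
exact: fib_bound.
Qed.


Lemma incidence (P L : {set R * R}) (lam : rat) : 0 < lam -> L \subset Fl ->
  (#|Inc P L|)%:R <= #|L|%:R * (#|P|%:R / (#|[set: R]|)%:R) + #|L|%:R * lam
     + (2 * #|P| * #|[set: R]| * #|Zs|)%:R / (4 * lam).
Proof.
move=> l0 sLF.
rewrite inc_sum natr_sum.
apply: (@var_bound _ Fl) => //.
rewrite var_expand.
have S1 : \sum_(l in Fl) ((xl P l)%:R : rat) = (#|P| * #|Tu|)%:R.
  by rewrite -natr_sum -inc_sum inc_F.
have S2 : \sum_(l in Fl) ((xl P l)%:R : rat) ^+ 2 <= ((#|P| + #|Tu| * #|Zs|) * #|P|)%:R.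
  rewrite (eq_bigr (fun l => ((xl P l ^ 2)%N%:R : rat))); last by move=> l _; rewrite natrX.
  by rewrite -natr_sum ler_nat sum_sq.
have hF : #|Fl| = (#|Tu| * #|[set: R]|)%N.
  rewrite -cardsX; apply: eq_card => [[a b]]; by rewrite !inE andbT.
have hNt : (#|[set: R]| <= #|Tu| + #|Zs|)%N.
  rewrite cardsT -(cardsC Tu) leq_add2l; apply: subset_leq_card; apply/subsetP => x.
  by rewrite !inE => /Hn.
have hP : (#|P| <= #|[set: R]| * #|[set: R]|)%N.
  by rewrite cardsT -card_prod -cardsT subset_leq_card // subsetT.
have ht : (#|Tu| <= #|[set: R]|)%N by rewrite subset_leq_card // subsetT.
have n0 : (0 < #|[set: R]|)%N by apply/card_gt0P; exists 0; rewrite inE.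
move: S2; rewrite S1 hF.
set s2 := \sum_(l in Fl) _.
move: hNt hP ht; rewrite -!(ler_nat rat) !natrM !natrD natrM.
have : 0 < (#|[set: R]|)%:R :> rat by rewrite ltr0n.
set n := (#|[set: R]|)%:R; set p := (#|P|)%:R; set t := (#|Tu|)%:R; set Z := (#|Zs|)%:R.
move=> {}n0 hNt hP ht S2.
have nn : n != 0 by rewrite gt_eqF.
rewrite -(ler_pM2r n0).
have -> : (s2 - 2 * (p / n) * (p * t) + t * n * (p / n) ^+ 2) * n = s2 * n - p * p * t.
  by field.
have p0 : 0 <= p by rewrite ler0n.
have t0 : 0 <= t by rewrite ler0n.
have Z0 : 0 <= Z by rewrite ler0n.
have h1 : s2 * n <= (p + t * Z) * p * n by rewrite ler_pM2r.
have h2 : p * p * (n - t) <= p * p * Z.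
  by apply: ler_wpM2l; [rewrite mulr_ge0 | rewrite lerBlDl].
have h3 : p * p * Z <= n * n * p * Z.
  by apply: (ler_wpM2r Z0); apply: (ler_wpM2r p0).
have h4 : t * Z * p * n <= n * Z * p * n.
  by rewrite -!mulrA; apply: ler_wpM2r => //; rewrite mulr_ge0 // mulr_ge0 // ltW.
clearbody n p t Z s2; clear -h1 h2 h3 h4.
nra.
Qed.

End Inc.

Local Open Scope ring_scope.
Section Alg2.
Variable R : finComUnitRingType.
Implicit Types a b c w x y : R.

Lemma aux1 w c y : w \is a GRing.unit -> c \is a GRing.unit -> (w * y) / (w / c) = y * c.
Proof.
move=> uw uc; rewrite invrM ?unitrV // invrK.
have -> : w * y * (c * w^-1) = y * c * (w * w^-1) by ring.
by rewrite mulrV // mulr1.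
Qed.

Lemma aux2 a b G1 c x : G1 \is a GRing.unit -> c \is a GRing.unit ->
  (a / G1 * b / c) * (G1 * (x * c)) = x * a * b.
Proof.
move=> u1 u2.
have -> : (a / G1 * b / c) * (G1 * (x * c)) = x * a * b * (G1^-1 * G1) * (c^-1 * c) by ring.
by rewrite !mulVr // !mulr1.
Qed.

Lemma aux3 a b G1 c x y : G1 \is a GRing.unit -> c \is a GRing.unit ->
  a * b * (x + y) / G1 = (a / G1 * b / c) * (x * c) + a / G1 * b * y.
Proof.
move=> u1 u2.
have -> : (a / G1 * b / c) * (x * c) = a / G1 * b * x * (c^-1 * c) by ring.
rewrite mulVr // mulr1; ring.
Qed.

Lemma phi_yc y c y' c' r1 r2 : c \is a GRing.unit -> c' \is a GRing.unit ->
  r1 \is a GRing.unit -> r2 \is a GRing.unit ->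
  r1 / c = r2 / c' -> r1 * y = r2 * y' -> y * c = y' * c'.
Proof.
move=> uc uc' u1 u2 e1 e2.
by rewrite -(aux1 y u1 uc) -(aux1 y' u2 uc') e1 e2.
Qed.

Lemma ux_eq x y c x0 y0 c0 : c \is a GRing.unit -> x0 \is a GRing.unit ->
  x * c = x0 * c0 -> y * c = y0 * c0 -> y0 / x0 * x = y.
Proof.
move=> uc ux0 e1 e2; apply: (mulIr uc).
have -> : y0 / x0 * x * c = y0 / x0 * (x * c) by ring.
rewrite e1 e2.
have -> : y0 / x0 * (x0 * c0) = y0 * c0 * (x0^-1 * x0) by ring.
by rewrite mulVr // mulr1.
Qed.

End Alg2.

Theorem theorem1p14 :
  forall (r K : nat), (1 <= K)%N ->
  exists c : rat, 0 < c /\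
  forall (R : finComUnitRingType) (z : R) (G : {set R}) (g h : R -> R),
    finite_valuation_ring R -> uniformizer z -> nilp_degree z r ->
    unit_subgroup G ->
    {in G, forall x, g x \is a GRing.unit} ->
    {in G, forall x, h x \is a GRing.unit} ->
    (forall w, w \in G ->
       (#|[set (g (x * w) / g x)%R | x in G]| <= K)%N /\
       (#|[set (h (x * w) / h x)%R | x in G]| <= K)%N) ->
    (forall u, u \in G -> (mu_on G (fun x => (x * g x * h (u * x))%R) <= K)%N) ->
    forall A B C : {set R}, A \subset G -> B \subset G -> C \subset G ->
      let q := residue_card z in
      let f := fun x y => g x * h y * (x + y) in
      c * Num.min ((q ^ r * #|A| * #|B|)%N%:R)
                  ((#|A| ^ 2 * #|B| ^ 2 * #|C|)%N%:R / (q ^ (2 * r - 1))%N%:R)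
      <= (#|fimage f A B| * #|setmul A C| * #|setmul B C|)%N%:R.
Proof.
move=> r K K1.
exists ((8 * K ^ 3 * 4 ^ r)%N%:R^-1); split.
  by rewrite invr_gt0 ltr0n !muln_gt0 expn_gt0 K1.
move=> R z G g h Hfvr Hz Hnil [HGu HG1 HGM HGV] Hgu Hhu Hi Hii A B C sA sB sC /=.
set q := residue_card z.
set f := fun x y : R => g x * h y * (x + y).
have Hn := nonunit_pideal Hfvr Hz.
have r0 : (0 < r)%N.
  case: r Hnil {Hii Hi} => // [[e _]].
  by move: e; rewrite expr0 => /eqP; rewrite oner_eq0.
have Z0 : (0 < #|pideal z|)%N by apply/card_gt0P; exists 0; apply/imsetP; exists 0; rewrite ?mulr0.
have ZN : (#|pideal z| <= #|[set: R]|)%N by apply: subset_leq_card; apply: subsetT.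
have [q0 hq1 hq2] := q_bounds Z0 ZN (chain Hnil Hn) r0.
have qE : q = (#|[set: R]| %/ #|pideal z|)%N by [].
rewrite -qE in q0 hq1 hq2.
have cnn : 0 <= ((8 * K ^ 3 * 4 ^ r)%N%:R^-1 : rat) by rewrite invr_ge0 ler0n.
case: (posnP (#|A| ^ 2 * #|B| ^ 2 * #|C|)) => [e0|pos].
  rewrite e0 mul0r; apply: le_trans (ler0n _ _).
  apply: mulr_ge0_le0 => //; by rewrite ge_min lexx orbT.
move: (pos); rewrite !muln_gt0 /= => /andP[/and3P[/andP[a0 _] b0 _] m0].
have uG : {in G, forall x, x \is a GRing.unit} := HGu.
pose AC := setmul A C; pose BC := setmul B C; pose FS := fimage f A B.
pose P' := [set (p.1, p.2 / g p.1) | p in setX AC FS].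
pose Rg := fun w => [set g (x * w) / g x | x in G].
pose D3 := [set t : R * R * R | [&& t.1.1 \in C, t.1.2 \in B & t.2 \in Rg (t.1.1)^-1]].
pose line := fun t : R * R * R => (t.2 * h t.1.2 / t.1.1, t.2 * h t.1.2 * t.1.2).
pose L := line @: D3.
pose Trip := setX (setX A B) C.
pose Phi := fun d : R * R * R => ((d.1.1 * d.2, f d.1.1 d.1.2 / g (d.1.1 * d.2)),
                                   line ((d.2, d.1.2), g d.1.1 / g (d.1.1 * d.2))).
have hP' : (#|P'| <= #|AC| * #|FS|)%N by rewrite -cardsX leq_imset_card.
have hD3 : (#|D3| <= K * #|setX C B|)%N.
  apply: (@fiber_bound _ _ (fun t => t.1)).
    by apply/subsetP => j /imsetP[t]; rewrite inE => /and3P[cC yB _] ->; rewrite inE cC yB.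
  move=> j; case: (set_0Vmem [set t in D3 | t.1 == j]) => [->|[t0]]; first by rewrite cards0.
  rewrite !inE => /andP[/and3P[t0C _ _] /eqP t0j].
  have jC : j.1 \in C by rewrite -t0j.
  have jG : j.1^-1 \in G by apply: HGV; apply: (subsetP sC).
  apply: (@leq_trans #|Rg j.1^-1|); last by case: (Hi _ jG).
  rewrite -(card_in_imset (f := snd) (D := [set t in D3 | t.1 == j])); last first.
    move=> [j1 t1] [j2 t2]; rewrite !inE /= => /andP[_ /eqP e1] /andP[_ /eqP e2] /= e.
    by rewrite e1 e2 e.
  apply: subset_leq_card; apply/subsetP => x /imsetP[t]; rewrite !inE => /andP[/and3P[_ _ tR] /eqP tj] ->.
  by rewrite -tj.
have hL : (#|L| <= K * (#|C| * #|B|))%N.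
  by rewrite -cardsX; apply: leq_trans (leq_imset_card _ _) hD3.
have sAG := subsetP sA; have sBG := subsetP sB; have sCG := subsetP sC.
have hLF : L \subset Fl R.
  apply/subsetP => l /imsetP[[[c y] rho]]; rewrite inE /= => /and3P[cC yB /imsetP[x xG ->]] ->.
  have cu : c \is a GRing.unit by apply: uG; apply: sCG.
  have xw : x * c^-1 \in G by apply: HGM => //; apply: HGV; apply: sCG.
  by rewrite inE /= !unitrM !unitrV cu !Hgu // Hhu ?sBG.
have hPhi : Phi @: Trip \subset Inc P' L.
  apply/subsetP => j /imsetP[[[x y] c]]; rewrite !inE /= => /andP[/andP[xA yB] cC] ->.
  have xG := sAG _ xA; have yG := sBG _ yB; have cG := sCG _ cC.
  have cu := uG _ cG; have xcG : x * c \in G by apply: HGM.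
  apply/and3P; split.
  - apply/imsetP; exists (x * c, f x y) => //.
    by rewrite inE /=; apply/andP; split; apply/imset2P; [exists x c | exists x y].
  - apply/imsetP; exists ((c, y), g x / g (x * c)) => //.
    rewrite inE /= cC yB /=; apply/imsetP; exists (x * c) => //.
    by rewrite mulrK.
  - rewrite /on /= /f; apply/eqP; apply: aux3 => //; exact: Hgu.
have hfib : forall j, (#|[set d in Trip | Phi d == j]| <= K)%N.
  move=> j; case: (set_0Vmem [set d in Trip | Phi d == j]) => [->|[[[x0 y0] c0]]].
    by rewrite cards0.
  rewrite !inE /= => /andP[/andP[/andP[x0A y0B] c0C] /eqP e0].
  have x0G := sAG _ x0A; have y0G := sBG _ y0B; have c0G := sCG _ c0C.
  have x0u := uG _ x0G; have c0u := uG _ c0G.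
  have x0c0G : x0 * c0 \in G by apply: HGM.
  have key : forall d, d \in [set d in Trip | Phi d == j] ->
    [/\ d.1.1 \in G, d.1.1 * d.2 = x0 * c0, d.1.2 * d.2 = y0 * c0 &
        d.1.1 * g d.1.1 * h d.1.2 = x0 * g x0 * h y0].
    move=> [[x y] c]; rewrite !inE /= => /andP[/andP[/andP[xA yB] cC] /eqP e].
    have xG := sAG _ xA; have yG := sBG _ yB; have cG := sCG _ cC.
    have cu := uG _ cG; have xcG : x * c \in G by apply: HGM.
    move: e; rewrite -e0 /Phi /line /= => -[e1 _ e2 e3].
    have yc : y * c = y0 * c0.
      apply: (@phi_yc _ y c y0 c0 _ _ cu c0u _ _ e2 e3); rewrite !unitrM ?unitrV ?Hgu ?Hhu //; exact: sBG.
    split => //.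
    rewrite -(aux2 _ _ _ (Hgu _ xcG) cu) e2 e1.
    by rewrite aux2 // Hgu.
  pose u := y0 / x0.
  have uG' : u \in G by apply: HGM => //; apply: HGV.
  apply: leq_trans (Hii u uG').
  apply: leq_trans (leq_bigmax (x0 * g x0 * h y0)).
  rewrite -(card_in_imset (f := fun d => d.1.1) (D := [set d in Trip | Phi d == j])); last first.
    move=> [[x y] c] [[x' y'] c'] d1 d2 /= ex; subst x'.
    have [xG e1 e2 _] := key _ d1; have [_ e1' e2' _] := key _ d2.
    move: e1 e2 e1' e2' => /= e1 e2 e1' e2'.
    have cc : c = c' by apply: (mulrI (uG _ xG)); rewrite e1 e1'.
    subst c'.
    have cu : c \is a GRing.unit.
      by move: d1; rewrite !inE => /andP[/andP[_ cC] _]; apply: uG; apply: sCG.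
    have yy : y = y' by apply: (mulIr cu); rewrite e2 e2'.
    by rewrite yy.
  apply: subset_leq_card; apply/subsetP => x /imsetP[d dS ->].
  have [xG e1 e2 e4] := key _ dS.
  rewrite inE xG /=; apply/eqP.
  have cu : d.2 \is a GRing.unit.
    by move: dS; rewrite !inE => /andP[/andP[_ cC] _]; apply: uG; apply: sCG.
  by rewrite (ux_eq cu x0u e1 e2).
have hTrip : (#|Trip| <= K * #|Inc P' L|)%N := fiber_bound hPhi hfib.
rewrite /Trip !cardsX in hTrip.
have hBC : (#|B| <= #|BC|)%N.
  case/card_gt0P: m0 => c1 c1C.
  have c1u : c1 \is a GRing.unit by apply: uG; apply: sCG.
  rewrite -(card_in_imset (f := fun y => y * c1) (D := B)); last first.
    by move=> y y' _ _; apply: (mulIr c1u).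
  apply: subset_leq_card; apply/subsetP => x /imsetP[y yB ->].
  by apply/imset2P; exists y c1.
have lam0 : 0 < (#|A|%:R / (4 * K%:R ^+ 2) : rat).
  by rewrite divr_gt0 ?ltr0n // mulr_gt0 // exprn_gt0 // ltr0n.
have hinc := @incidence R (pideal z) Hn P' L _ lam0 hLF.
rewrite !natrM in hinc.
rewrite !natrM !natrX (mulrC (#|fimage f A B|%:R)).
have h1 : (#|A|%:R * #|B|%:R * #|C|%:R : rat) <= K%:R * #|Inc P' L|%:R.
  by rewrite -!natrM ler_nat.
have hL' : (#|L|%:R : rat) <= K%:R * #|C|%:R * #|B|%:R.
  by rewrite -!natrM ler_nat -mulnA.
have hP'' : (#|P'|%:R : rat) <= #|AC|%:R * #|FS|%:R by rewrite -natrM ler_nat.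
have hY : (#|B|%:R : rat) <= #|BC|%:R by rewrite ler_nat.
have hq : ((residue_card z)%:R ^+ r : rat) <= #|[set: R]|%:R by rewrite -natrX ler_nat.
have hNZ : (#|[set: R]|%:R * #|pideal z|%:R : rat) <=
    4%:R ^+ r * (residue_card z)%:R ^+ (2 * r - 1).
  by rewrite -!natrX -!natrM ler_nat.
have e3 : (K%:R * (K%:R * K%:R) : rat) = K%:R ^+ 3 by rewrite !exprS expr0 mulr1.
rewrite e3 -!expr2.
have FA := final_arith (a := #|A|%:R) (b := #|B|%:R) (m := #|C|%:R) (K := K%:R)
  (X := #|AC|%:R * #|FS|%:R) (Y := #|BC|%:R) (Lc := #|L|%:R) (Pc := #|P'|%:R)
  (Ic := #|Inc P' L|%:R) (n := #|[set: R]|%:R) (Z := #|pideal z|%:R)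
  (qr := (residue_card z)%:R ^+ r) (qq := (residue_card z)%:R ^+ (2 * r - 1)) (F4 := 4%:R ^+ r).
have FA5 := FA _ _ _ _ _ _ _ _ _ _ _ h1 hinc hL' hP'' hY hq hNZ.
apply: FA5.
- by rewrite ler1n.
- by rewrite ler1n.
- by rewrite ler1n.
- by rewrite ler1n.
- by rewrite mulr_ge0 ?ler0n.
- by rewrite ltr0n; apply/card_gt0P; exists 0; rewrite inE.
- by rewrite ler0n.
- by rewrite ler0n.
- by rewrite ler0n.
- by rewrite exprn_gt0 // ltr0n.
- by rewrite exprn_ege1 // ler1n.
Qed.
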